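(* Let $d\ge2$, let $\sigma:\mathbb R\to\mathbb R$ be a non-linear (not affine) Lipschitz function applied element-wise to vectors in $\mathbb R^d$, let $\mathscr A\subseteq\mathbb R^{d\times d}$, and consider the control family $$\mathcal F=\{x\mapsto W\sigma(Ax+b) : W\in\mathbb R^{d\times d}\text{ diagonal},\ A\in\mathscr A,\ b\in\mathbb R^d\}.$$ If for every $l=1,\dots,d$ the set $\{v\in\mathbb R^d : v \text{ is the } l\text{-th row of } A \text{ for some } A\in\mathscr A\}$ equals $\mathbb R^d$, then the control system with control family $\mathcal F$ possesses the universal interpolation property.
   Context: For $g\in\mathcal F$, $\varphi^g_t$ is the time-$t$ flow of $\dot x=g(x)$; $\mathcal A_{\mathcal F}$ is the set of all finite compositions $\varphi^{f_k}_{t_k}\circ\cdots\circ\varphi^{f_1}_{t_1}$, $f_i\in\mathcal F$, $t_i\ge0$. Universal interpolation property: for every $\varepsilon>0$, every $N$ and every data $(x_i,y_i)_{i=1}^N$ in $\mathbb R^d\times\mathbb R^d$ with $x_i\ne x_j$, $y_i\ne y_j$ for $i\ne j$, there is $\varphi\in\mathcal A_{\mathcal F}$ with $\|\varphi(x_i)-y_i\|_\infty\le\varepsilon$ for all $i$. *)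

(* Defs.v *)
From HB Require Import structures.
From mathcomp Require Import all_boot all_order all_algebra.
From mathcomp Require Import all_classical all_reals all_analysis.
Set Implicit Arguments. Unset Strict Implicit. Unset Printing Implicit Defensive.
Import Order.TTheory GRing.Theory Num.Theory.
Import numFieldNormedType.Exports.
Local Open Scope classical_set_scope.
Local Open Scope ring_scope.

Definition time_flow {R : realType} {d : nat}
    (g : 'cV[R]_d -> 'cV[R]_d) (t : R) (phi : 'cV[R]_d -> 'cV[R]_d) : Prop :=
  forall x : 'cV[R]_d, exists gamma : R -> 'cV[R]_d,
    gamma 0 = x /\ (forall s : R, is_derive s 1 gamma (g (gamma s))) /\
    phi x = gamma t.

Inductive in_AF {R : realType} {d : nat} (F : set ('cV[R]_d -> 'cV[R]_d)) :
    ('cV[R]_d -> 'cV[R]_d) -> Prop :=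
| AF_flow : forall g t phi, F g -> 0 <= t -> time_flow g t phi -> in_AF F phi
| AF_comp : forall psi g t phi, in_AF F psi -> F g -> 0 <= t ->
    time_flow g t phi -> in_AF F (phi \o psi).

Definition universal_interpolation {R : realType} {d : nat}
    (F : set ('cV[R]_d -> 'cV[R]_d)) : Prop :=
  forall (eps : R), 0 < eps -> forall (N : nat) (x y : 'I_N -> 'cV[R]_d),
    injective x -> injective y ->
    exists phi, in_AF F phi /\
      forall (i : 'I_N) (k : 'I_d), `|phi (x i) k ord0 - y i k ord0| <= eps.

Definition lipschitz_fun {R : realType} (s : R -> R) : Prop :=
  exists L : R, forall u v : R, `|s u - s v| <= L * `|u - v|.

Definition affine_fun {R : realType} (s : R -> R) : Prop :=
  exists a b : R, forall u : R, s u = a * u + b.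

Definition ctrl_family {R : realType} {d : nat} (sigma : R -> R)
    (AA : set 'M[R]_d) : set ('cV[R]_d -> 'cV[R]_d) :=
  [set f | exists (W : 'M[R]_d) (A : 'M[R]_d) (b : 'cV[R]_d),
     is_diag_mx W /\ AA A /\ f = (fun x => W *m map_mx sigma (A *m x + b))].

(* Main.v *)
Require Import Defs.
From HB Require Import structures.
From mathcomp Require Import all_boot all_order all_algebra.
From mathcomp Require Import all_classical all_reals all_analysis.
From mathcomp Require Import ring lra.
Set Implicit Arguments. Unset Strict Implicit. Unset Printing Implicit Defensive.
Import Order.TTheory GRing.Theory Num.Theory.
Import numFieldNormedType.Exports.
Local Open Scope classical_set_scope.
Local Open Scope ring_scope.


Section Ana.
Context {R : realType}.
Notation mu := (@lebesgue_measure R).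

Definition prim (g : R -> R) (c : R) (y : R) : R := (\int[mu]_(t in `[c, y]) g t)%R.

Lemma prim_derive (g : R -> R) (c x : R) : continuous g -> c < x ->
  is_derive x 1 (prim g c) (g x).
Proof.
move=> cg cx.
have [] := @continuous_FTC1_closed R g c x (x + 1) _ _ cx _.
- by rewrite ltrDl.
- apply: continuous_compact_integrable; first exact: segment_compact.
  by apply: continuous_subspaceT => z; apply: cg.
- exact: cg.
move=> d e; rewrite -e derive1E; exact: derivableP.
Qed.

Lemma der_lin (al be x : R) : is_derive x 1 (fun a : R => a * al + be) al.
Proof.
have H := is_deriveD (is_deriveZ al (is_derive_id x 1)) (is_derive_cst be x 1).
have -> : (fun a : R => a * al + be) = (al \*: id) + cst be.
  by apply/funext => a /=; rewrite mulrC.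
by apply: is_derive_eq H _; rewrite addr0; apply: mulr1.
Qed.

Lemma der_kprim g c k (u : R -> R) du x : continuous g -> c < u x ->
  is_derive x 1 u du -> is_derive x 1 (fun s => k * prim g c (u s)) (k * (g (u x) * du)).
Proof.
move=> cg cu du'.
have H := is_deriveZ k (is_derive1_comp (prim_derive cg cu) du').
exact: H.
Qed.

Lemma sumseq_derive (T : eqType) (L : seq T) (F : T -> R -> R) (dF : T -> R) (x : R) :
  (forall p, p \in L -> is_derive x 1 (F p) (dF p)) ->
  is_derive x 1 (fun y => \sum_(p <- L) F p y) (\sum_(p <- L) dF p).
Proof.
elim: L => [|q L IH] H.
  have -> : (fun y => \sum_(p <- [::]) F p y) = cst 0.
    by apply/funext => y; rewrite big_nil.
  rewrite big_nil; exact: is_derive_cst.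
have -> : (fun y => \sum_(p <- q :: L) F p y) = F q + (fun y => \sum_(p <- L) F p y).
  by apply/funext => y; rewrite big_cons.
rewrite big_cons; apply: is_deriveD.
  by apply: H; rewrite mem_head.
by apply: IH => p pL; apply: H; rewrite inE pL orbT.
Qed.

Lemma loc_cst (f : R -> R) (u v : R) : u <= v ->
  (forall z : R, u <= z <= v -> is_derive z 1 f 0) -> f u = f v.
Proof.
move=> uv H.
have [] := @MVT_segment R f (fun=> 0) u v uv.
- by move=> z; rewrite in_itv /= => /andP[a b]; apply: H; rewrite (ltW a) (ltW b).
- apply: (@derivable_within_continuous R R^o f `[u, v]%R) => z; rewrite in_itv /= => zi.
  by have [] := H z zi.
- move=> z _; rewrite mul0r => /eqP; rewrite subr_eq0 => /eqP ->. by [].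
Qed.

Lemma mem_le_sum (L : seq (R * R)) p : p \in L -> `|p.2| <= \sum_(q <- L) `|q.2|.
Proof.
elim: L => // q L IH; rewrite inE big_cons => /orP[/eqP->|pL].
  by rewrite lerDl sumr_ge0.
by rewrite (le_trans (IH pL)) // lerDr.
Qed.

Definition rel (L : seq (R * R)) (g : R -> R) :=
  forall a b : R, \sum_(p <- L) p.1 * g (a * p.2 + b) = 0.

Lemma KA (g : R -> R) L : continuous g -> rel L g -> forall a b h,
  \sum_(p <- L) p.1 * p.2 * g (a * p.2 + b + h) =
  \sum_(p <- L) p.1 * p.2 * g (a * p.2 + b).
Proof.
move=> cg Hr a0 b h.
set M := \sum_(q <- L) `|q.2|.
have M0 : 0 <= M by rewrite sumr_ge0.
set c := b - `|h| - 1 - (`|a0| + 1) * M.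
have Hc : forall p a s, p \in L -> `|a - a0| < 1 -> `|s| < `|h| + 1 ->
    c < a * p.2 + (b + s).
  move=> p a s pL ha hs.
  have h1 : `|a * p.2| <= (`|a0| + 1) * M.
    rewrite normrM; apply: ler_pM => //; last exact: mem_le_sum.
    have := ler_normD a0 (a - a0); rewrite addrC subrK => h2.
    lra.
  move: h1; rewrite ler_norml => /andP[h1 _].
  move: hs; rewrite ltr_norml => /andP[h3 _].
  rewrite /c; lra.
pose P a s := \sum_(p <- L) p.1 * prim g c (a * p.2 + (b + s)).
have step1 : forall a, `|a - a0| < 1 -> P a h = P a 0.
  move=> a ha.
  have gen : forall u v, u <= v -> `|u| <= `|h| -> `|v| <= `|h| -> P a u = P a v.
    move=> u v uv hu hv; apply: loc_cst => // z /andP[uz zv].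
    have hz : `|z| < `|h| + 1.
      move: hu hv; rewrite !ler_norml => /andP[? ?] /andP[? ?].
      rewrite ltr_norml; apply/andP; split; lra.
    apply: is_derive_eq.
      apply: (@sumseq_derive _ L (fun p s => p.1 * prim g c (a * p.2 + (b + s)))
        (fun p => p.1 * (g (a * p.2 + (b + z)) * 1))).
      move=> p pL; apply: der_kprim => //; first exact: Hc.
      have -> : (fun s => a * p.2 + (b + s)) = (fun s => s * 1 + (a * p.2 + b)).
        by apply/funext => s; ring.
      exact: der_lin.
    under eq_bigr do rewrite mulr1.
    exact: Hr.
  case: (leP 0 h) => h0.
    by apply/esym/gen; rewrite ?normr0.
  by apply: gen; rewrite ?normr0 // ltW.
pose Q a := P a h - P a 0.
have dQ0 : is_derive a0 1 Q 0.
  apply: (@near_eq_is_derive R R^o R^o (cst 0) Q a0 1 0).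
  apply/nbhs_ballP; exists 1 => //= a; rewrite /ball /= => ha.
  by rewrite /Q step1 ?subrr // distrC.
have dQ : is_derive a0 1 Q
   (\sum_(p <- L) p.1 * (g (a0 * p.2 + (b + h)) * p.2) -
    \sum_(p <- L) p.1 * (g (a0 * p.2 + (b + 0)) * p.2)).
  have hh : `|h| < `|h| + 1 by rewrite ltrDl.
  have h0' : `|0:R| < `|h| + 1 by rewrite normr0 (le_lt_trans (normr_ge0 h) hh).
  have a00 : `|a0 - a0| < 1 by rewrite subrr normr0 ltr01.
  apply: is_deriveB; apply: sumseq_derive => p pL; apply: der_kprim => //.
  - by apply: Hc.
  - by apply: der_lin.
  - by apply: Hc.
  - by apply: der_lin.
case: dQ => _; case: dQ0 => _ ->.
move=> /esym/eqP; rewrite subr_eq0 addr0 => /eqP E.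
transitivity (\sum_(p <- L) p.1 * (g (a0 * p.2 + (b + h)) * p.2)).
  by apply: eq_bigr => p _; rewrite addrA; ring.
rewrite E; apply: eq_bigr => p _; rewrite ?addr0; ring.
Qed.

Definition lipf (g : R -> R) := exists K : R, forall u v, `|g u - g v| <= K * `|u - v|.

Lemma lip_cont (g : R -> R) : lipf g -> continuous g.
Proof.
move=> [K H] x; apply/cvgrPdist_le => /= e e0.
have K1 : 0 < `|K| + 1 by rewrite ltr_pwDr // normr_ge0.
apply/nbhs_ballP; exists (e / (`|K| + 1)); first by apply: divr_gt0.
move=> y; rewrite /ball /= => hy.
apply: (le_trans (H x y)).
apply: (@le_trans _ _ ((`|K| + 1) * `|x - y|)).
  apply: ler_wpM2r => //; have := real_ler_norm (num_real K); lra.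
apply: (@le_trans _ _ ((`|K| + 1) * (e / (`|K| + 1)))).
  by apply: ler_wpM2l; [exact: ltW | exact: ltW].
by rewrite mulrC divfK // gt_eqF.
Qed.

Definition delta (h : R) (g : R -> R) := fun u => g (u + h) - g u.

Definition tmul (L : seq (R * R)) := [seq (p.1 * p.2, p.2) | p <- L].

Lemma lip_delta h g : lipf g -> lipf (delta h g).
Proof.
move=> [K H]; exists (K + K) => u v; rewrite /delta.
have -> : g (u + h) - g u - (g (v + h) - g v) = (g (u + h) - g (v + h)) - (g u - g v) by ring.
apply: (le_trans (ler_normB _ _)); rewrite mulrDl; apply: lerD => //.
by have := H (u + h) (v + h); rewrite opprD addrACA subrr addr0.
Qed.

Lemma rel_delta L h g : lipf g -> rel L g -> rel (tmul L) (delta h g).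
Proof.
move=> lg Hr a b; rewrite big_map /delta /=.
have := KA (lip_cont lg) Hr a b h.
under eq_bigr do rewrite mulrBr.
rewrite sumrB => ->; by rewrite subrr.
Qed.

Fixpoint Dn (hs : seq R) (g : R -> R) : R -> R :=
  if hs is h :: hs' then Dn hs' (delta h g) else g.

Lemma rel_Dn hs : forall L g, lipf g -> rel L g -> rel (iter (size hs) tmul L) (Dn hs g).
Proof.
elim: hs => [|h hs IH] L g lg Hr //=.
rewrite -iterS iterSr; apply: IH; [exact: lip_delta | exact: rel_delta].
Qed.

Lemma iter_tmul m L : iter m tmul L = [seq (p.1 * p.2 ^+ m, p.2) | p <- L].
Proof.
elim: m => [|m IH] /=; first by rewrite -[LHS]map_id; apply: eq_map => -[x y]; rewrite /= expr0 mulr1.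
by rewrite IH /tmul -map_comp; apply: eq_map => -[x y] /=; congr (_, _); rewrite exprS; ring.
Qed.

Lemma small_mult (c B : R) : (forall n : nat, `|n%:R * c| <= B) -> c = 0.
Proof.
move=> H; have B0 : 0 <= B by have := H 0%N; rewrite mul0r normr0.
apply/eqP/negPn/negP => c0.
have cp : 0 < `|c| by rewrite normr_gt0.
have := archi_boundP (divr_ge0 B0 (ltW cp)); set n := Num.Def.archi_bound _.
rewrite ltr_pdivrMr // => Hn.
have := H n; rewrite normrM normr_nat; lra.
Qed.

Lemma Dn_zero_cst m : forall g : R -> R, (exists B, forall u, `|g u| <= B) ->
  (forall hs, size hs = m -> forall u, Dn hs g u = 0) -> forall u, g u = g 0.
Proof.
elim: m => [|m IH] g [B hB] H.
  by move=> u; move: (H [::] erefl u) (H [::] erefl 0) => /= -> ->.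
have dc : forall h u, g (u + h) - g u = g h - g 0.
  move=> h u.
  have := IH (delta h g) _ _ u.
  rewrite /delta add0r; apply.
    exists (B + B) => v; apply: (le_trans (ler_normB _ _)); exact: lerD.
  by move=> hs shs v; apply: (H (h :: hs)); rewrite /= shs.
have c0 : forall h, g h - g 0 = 0.
  move=> h; apply: (@small_mult _ (B + B)) => n.
  have -> : n%:R * (g h - g 0) = g (n%:R * h) - g 0.
    elim: n => [|n IHn]; first by rewrite !mul0r subrr.
    rewrite -addn1 natrD !mulrDl !mul1r IHn; have := dc h (n%:R * h); lra.
  apply: (le_trans (ler_normB _ _)); exact: lerD.
by move=> u; apply/eqP; rewrite -subr_eq0 c0.
Qed.

Lemma affine_of (s : R -> R) : lipf s ->
  (forall u k, s (u + k) - s u = s k - s 0) -> exists a b : R, forall u, s u = a * u + b.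
Proof.
move=> [L HL] Hd.
set c1 := s 1 - s 0.
pose e u := s u - s 0 - u * c1.
have eadd : forall u k, e (u + k) = e u + e k.
  move=> u k; rewrite /e; have := Hd u k; lra.
have e0 : e 0 = 0 by rewrite /e mul0r !subrr.
have enat : forall n : nat, e n%:R = 0.
  elim=> [|n IHn]; first exact: e0.
  by rewrite -addn1 natrD eadd IHn /e mul1r /c1 !subrr add0r.
have eneg : forall x, e (- x) = - e x.
  by move=> x; apply/eqP; rewrite -subr_eq0 opprK -eadd addNr e0.
have eint : forall z : int, e z%:~R = 0.
  case=> n; first exact: enat.
  by rewrite NegzE mulrNz eneg enat oppr0.
have emul : forall (n : nat) u, e (n%:R * u) = n%:R * e u.
  move=> n u; elim: n => [|n IHn]; first by rewrite !mul0r.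
  by rewrite -addn1 natrD !mulrDl !mul1r eadd IHn.
have L0 : 0 <= L.
  have := HL 1 0; rewrite subr0 normr1 mulr1 => h; exact: le_trans h.
set K := L + `|c1|.
have elip : forall u, `|e u| <= K * `|u|.
  move=> u; rewrite /e.
  apply: (le_trans (ler_normD _ _)); rewrite mulrDl.
  apply: lerD; first by have := HL u 0; rewrite subr0.
  by rewrite normrN normrM mulrC lexx.
have eu0 : forall u, e u = 0.
  move=> u; apply: (@small_mult _ K) => n.
  set x := n%:R * u.
  have fl := floor_itv x.
  rewrite -emul -/x.
  have -> : x = (x - (Num.floor x)%:~R) + (Num.floor x)%:~R by rewrite subrK.
  rewrite eadd eint addr0.
  apply: (le_trans (elip _)).
  have K0 : 0 <= K by rewrite /K addr_ge0.
  rewrite -[X in _ <= X]mulr1; apply: ler_wpM2l => //.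
  move: fl; rewrite intrD => /andP[f1 f2].
  rewrite ger0_norm; lra.
exists c1, (s 0) => u; have := eu0 u; rewrite /e; lra.
Qed.


Lemma moments (L : seq (R * R)) (tau : R) :
  \sum_(p <- L | p.2 == tau) p.1 != 0 ->
  exists m, \sum_(p <- L) p.1 * p.2 ^+ m != 0.
Proof.
move=> Hne; apply: contrapT => Hall.
have Hall' : forall m, \sum_(p <- L) p.1 * p.2 ^+ m = 0.
  by move=> m; apply/eqP/negPn/negP => h; apply: Hall; exists m.
set P := \prod_(q <- L | q.2 != tau) ('X - q.2%:P).
have H1 : \sum_(p <- L) p.1 * P.[p.2] = 0.
  under eq_bigr do rewrite horner_coef big_distrr /=.
  rewrite exchange_big /=; apply: big1 => i _.
  transitivity (P`_i * \sum_(p <- L) p.1 * p.2 ^+ i); last by rewrite Hall' mulr0.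
  by rewrite big_distrr; apply: eq_bigr => p _ /=; ring.
have H2 : \sum_(p <- L) p.1 * P.[p.2] = P.[tau] * \sum_(p <- L | p.2 == tau) p.1.
  rewrite big_distrr /= [in RHS]big_mkcond /=; apply: eq_big_seq => p pL.
  case: eqP => [-> | ne]; first by rewrite mulrC.
  apply/eqP; rewrite mulf_eq0 horner_prod prodf_seq_eq0; apply/orP; right.
  apply/hasP; exists p => //; rewrite hornerXsubC subrr eqxx andbT.
  by apply/eqP.
have H3 : P.[tau] != 0.
  rewrite horner_prod prodf_seq_neq0; apply/allP => q _; apply/implyP => qt.
  by rewrite hornerXsubC subr_eq0 eq_sym.
by move: H1; rewrite H2 => /eqP; rewrite mulf_eq0 (negPf H3) (negPf Hne).
Qed.

Lemma annih (s : R -> R) : lipf s -> ~ (exists a b : R, forall u, s u = a * u + b) ->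
  forall L, rel L s -> forall tau, \sum_(p <- L | p.2 == tau) p.1 = 0.
Proof.
move=> ls naff L HL tau; apply/eqP/negPn/negP => Hne.
have [m Hm] := moments Hne.
apply: naff; apply: affine_of => // u k.
have lg : lipf (delta k s) by exact: lip_delta.
have rg : rel L (delta k s).
  move=> a b; rewrite /delta; under eq_bigr do rewrite mulrBr -addrA.
  by rewrite sumrB !HL subrr.
have bg : exists B, forall u, `|delta k s u| <= B.
  case: ls => K HK; exists (K * `|k|) => v; rewrite /delta.
  by have := HK (v + k) v; rewrite addrAC subrr add0r.
have := @Dn_zero_cst m (delta k s) bg _ u.
rewrite /delta add0r; apply.
move=> hs shs v.
have := @rel_Dn hs _ _ lg rg 0 v; rewrite shs iter_tmul big_map /=.
under eq_bigr do rewrite mul0r add0r.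
rewrite -big_distrl /= => /eqP; rewrite mulf_eq0 (negPf Hm) /= => /eqP //.
Qed.

End Ana.

Section Span.
Context {R : realType} (s : R -> R) (ls : lipf s)
  (naff : ~ (exists a b : R, forall u, s u = a * u + b)).

Definition Hf (h : R -> R) := exists T : seq (R * R * R),
  forall x, h x = \sum_(q <- T) q.1.1 * s (q.1.2 * x + q.2).

Lemma Hf0 : Hf (fun _ => 0).
Proof. by exists [::] => x; rewrite big_nil. Qed.

Lemma HfD f g : Hf f -> Hf g -> Hf (fun x => f x + g x).
Proof.
move=> [T1 H1] [T2 H2]; exists (T1 ++ T2) => x; by rewrite big_cat H1 H2.
Qed.

Lemma HfZ k f : Hf f -> Hf (fun x => k * f x).
Proof.
move=> [T H]; exists [seq ((k * q.1.1, q.1.2), q.2) | q <- T] => x.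
rewrite big_map H big_distrr; apply: eq_bigr => q _ /=; by rewrite mulrA.
Qed.

Lemma Hfs al a b : Hf (fun x => al * s (a * x + b)).
Proof. by exists [:: ((al, a), b)] => x; rewrite big_seq1. Qed.

Lemma Hf_sum (I : eqType) (r : seq I) (F : I -> R -> R) :
  (forall i, i \in r -> Hf (F i)) -> Hf (fun x => \sum_(i <- r) F i x).
Proof.
elim: r => [|i r IH] HF.
  by exists [::] => x; rewrite !big_nil.
have IH' : Hf (fun x => \sum_(j <- r) F j x).
  by apply: IH => j jr; apply: HF; rewrite inE jr orbT.
have [T HT] := HfD (HF i (mem_head _ _)) IH'.
by exists T => x; rewrite big_cons HT.
Qed.

Lemma Hf_ext f g : Hf f -> (forall x, f x = g x) -> Hf g.
Proof. by move=> [T H] E; exists T => x; rewrite -E H. Qed.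

Lemma Hf_one : Hf (fun _ => 1).
Proof.
have [b sb] : exists b, s b != 0.
  apply: contrapT => H; apply: naff; exists 0, 0 => u.
  rewrite mul0r addr0; apply/eqP/negPn/negP => h; apply: H; by exists u.
apply: (Hf_ext (Hfs (s b)^-1 0 b)) => x.
by rewrite /= mul0r add0r mulVf.
Qed.

Lemma sep n : forall S : seq R, size S = n -> uniq S -> forall t0, t0 \notin S ->
  exists g, Hf g /\ (forall t, t \in S -> g t = 0) /\ g t0 = 1.
Proof.
elim: n => [|n IH] S sS uS t0 t0S.
  case: S sS uS t0S => // _ _ _; exists (fun _ => 1); split; first exact: Hf_one.
  by split.
have Hch : forall tau, exists g, tau \in S ->
    Hf g /\ (forall t, t \in rem tau S -> g t = 0) /\ g tau = 1.
  move=> tau; case: (boolP (tau \in S)) => tS; last by exists (fun _ => 0).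
  have Hsz : size (rem tau S) = n by rewrite size_rem // sS.
  have Hn : tau \notin rem tau S by rewrite mem_rem_uniq //= inE eqxx.
  have [g Hg] := IH (rem tau S) Hsz (rem_uniq tau uS) tau Hn.
  by exists g.
have [G HG] := choice Hch.
apply: contrapT => Hno.
have F0 : forall f, Hf f -> (forall t, t \in S -> f t = 0) -> f t0 = 0.
  move=> f Hf1 Hz; apply/eqP/negPn/negP => ft0; apply: Hno.
  exists (fun x => (f t0)^-1 * f x); split; first exact: HfZ.
  split; first by move=> t tS; rewrite /= (Hz t tS) mulr0.
  by rewrite /= mulVf.
have GS : forall tau t, tau \in S -> t \in S -> G tau t = (tau == t)%:R.
  move=> tau t tS tS'; have [_ [Hz H1]] := HG tau tS.
  case: eqP => [<- //| ne]; apply: Hz; rewrite mem_rem_uniq //= inE tS' andbT.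
  by apply/eqP => e; apply: ne.
pose L := (1, t0) :: [seq (- G tau t0, tau) | tau <- S].
have HL : rel L s.
  move=> a b.
  pose f x := s (a * x + b) - \sum_(tau <- S) s (a * tau + b) * G tau x.
  have Hf1 : Hf f.
    apply: HfD; first by apply: (Hf_ext (Hfs 1 a b)) => x; rewrite mul1r.
    have HS : Hf (fun x => \sum_(tau <- S) s (a * tau + b) * G tau x).
      apply: (@Hf_sum _ S (fun tau x => s (a * tau + b) * G tau x)) => tau tS.
      have [HG1 _] := HG tau tS.
      exact: (HfZ (s (a * tau + b)) HG1).
    apply: (Hf_ext (HfZ (-1) HS)) => x /=.
    by rewrite mulN1r.
  have Hvan : forall t, t \in S -> f t = 0.
    move=> t tS; rewrite /f; apply/eqP; rewrite subr_eq0; apply/eqP.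
    rewrite (bigD1_seq t) //= GS // eqxx mulr1 big1_seq ?addr0 // => tau /andP[nt tS'].
    by rewrite GS // (negPf nt) mulr0.
  have E := F0 f Hf1 Hvan.
  rewrite /L big_cons big_map /= mul1r -[RHS]E /f; congr (_ + _).
  rewrite -sumrN; apply: eq_bigr => tau _; by rewrite mulNr mulrC.
have := annih ls naff HL t0.
rewrite /L big_cons /= eqxx big_map big1_seq ?addr0.
  by move/eqP; rewrite oner_eq0.
move=> tau /andP[/= e tS]; move: t0S; rewrite -(eqP e) tS //.
Qed.

Lemma interp (S : seq R) : uniq S -> forall C : R -> R,
  exists h, Hf h /\ forall t, t \in S -> h t = C t.
Proof.
elim: S => [|t0 S IH] uS C.
  by exists (fun _ => 0); split => //; exact: Hf0.
move: uS => /= /andP[t0S uS].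
have [h [Hh hC]] := IH uS C.
have [g [Hg [gz g1]]] := sep erefl uS t0S.
exists (fun x => h x + (C t0 - h t0) * g x); split.
  by apply: HfD => //; apply: HfZ.
move=> t; rewrite inE => /orP[/eqP -> | tS].
  by rewrite g1 mulr1 addrC subrK.
by rewrite gz // mulr0 addr0 hC.
Qed.

End Span.

Section Geo.
Context {R : realType} {d : nat} (sg : R -> R) (AA : set 'M[R]_d)
  (hrow : forall l : 'I_d, [set v : 'rV[R]_d | exists A, AA A /\ row l A = v] = setT).

Definition ek (k : 'I_d) : 'cV[R]_d := delta_mx k 0.

Definition Emap (k j : 'I_d) (al a be : R) (x : 'cV[R]_d) : 'cV[R]_d :=
  x + (al * sg (a * x j 0 + be)) *: ek k.

Lemma der_scale (w : 'cV[R]_d) (s0 : R) : is_derive s0 1 (fun s : R => s *: w) w.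
Proof.
have D := @is_diff_scalel R 'cV[R]_d s0 w.
apply: DeriveDef; first exact/diff_derivable/ex_diff.
by rewrite deriveE ?diff_val ?scale1r //; exact: ex_diff.
Qed.

Lemma ek_j (k j : 'I_d) : j != k -> ek k j 0 = 0.
Proof. by move=> jk; rewrite /ek mxE (negPf jk). Qed.

Lemma E_inAF (k j : 'I_d) al a be : j != k -> in_AF (ctrl_family sg AA) (Emap k j al a be).
Proof.
move=> jk.
have : [set v : 'rV[R]_d | exists A, AA A /\ row k A = v] (a *: delta_mx 0 j).
  by rewrite hrow.
move=> [A [AAA rowA]].
pose W : 'M[R]_d := al *: delta_mx k k.
pose g := fun x : 'cV[R]_d => W *m map_mx sg (A *m x + const_mx be).
have gE : forall x, g x = (al * sg (a * x j 0 + be)) *: ek k.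
  move=> x; apply/matrixP => i z; rewrite (ord1 z) !mxE.
  rewrite (bigD1 k) //= big1 ?addr0; last first.
    by move=> l lk; rewrite !mxE (negPf lk) andbF /= mulr0 mul0r.
  rewrite !mxE !eqxx !andbT.
  have -> : \sum_(l < d) A k l * x l 0 = a * x j 0.
    rewrite (bigD1 j) //= big1 ?addr0; last first.
      move=> l lj; have := congr1 (fun M : 'rV[R]_d => M 0 l) rowA; rewrite !mxE /= => ->.
      by rewrite (negPf lj) /= mulr0 mul0r.
    have := congr1 (fun M : 'rV[R]_d => M 0 j) rowA; rewrite !mxE /= => ->.
    by rewrite eqxx mulr1.
  by rewrite mulrAC.
apply: (@AF_flow _ _ _ g 1).
- exists W, A, (const_mx be); split; last by split.
  apply/is_diag_mxP => i l il; rewrite !mxE.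
  have [ik|ik] := eqVneq i k; have [lk|lk] := eqVneq l k; rewrite /= ?mulr0 //.
  by move: il; rewrite ik lk eqxx.
- exact: ler01.
move=> x.
pose w := (al * sg (a * x j 0 + be)) *: ek k.
exists (fun s : R => x + s *: w); split; first by rewrite scale0r addr0.
split; last by rewrite scale1r.
move=> s0; rewrite gE.
have -> : (x + s0 *: w) j 0 = x j 0 by rewrite !mxE (negPf jk) /= ?mulr0 ?addr0.
apply: is_derive_eq.
  exact: (is_deriveD (is_derive_cst x s0 1) (der_scale w s0)).
by rewrite add0r.
Qed.

Lemma AF_compose (f1 f2 : 'cV[R]_d -> 'cV[R]_d) :
  in_AF (ctrl_family sg AA) f1 -> in_AF (ctrl_family sg AA) f2 ->
  in_AF (ctrl_family sg AA) (f2 \o f1).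
Proof.
move=> H1 H2; elim: H2 => [g t phi Fg t0 fl | psi g t phi _ IH Fg t0 fl].
  exact: (AF_comp H1 Fg t0 fl).
exact: (AF_comp IH Fg t0 fl).
Qed.

Definition Reach (N : nat) (P Q : 'I_N -> 'cV[R]_d) :=
  exists phi, in_AF (ctrl_family sg AA) phi /\ forall i, phi (P i) = Q i.

Lemma Reach_trans N (P Q S : 'I_N -> 'cV[R]_d) : Reach P Q -> Reach Q S -> Reach P S.
Proof.
move=> [f1 [H1 E1]] [f2 [H2 E2]]; exists (f2 \o f1); split.
  exact: AF_compose.
by move=> i /=; rewrite E1 E2.
Qed.

Lemma Reach_E N (P : 'I_N -> 'cV[R]_d) k j al a be : j != k ->
  Reach P (fun i => Emap k j al a be (P i)).
Proof. by move=> jk; exists (Emap k j al a be); split => //; exact: E_inAF. Qed.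

Lemma Reach_refl N (P Q : 'I_N -> 'cV[R]_d) (k j : 'I_d) : j != k ->
  (forall i, Q i = P i) -> Reach P Q.
Proof.
move=> jk E; have [phi [H1 H2]] := Reach_E P 0 0 0 jk.
by exists phi; split => // i; rewrite H2 E /Emap mul0r scale0r addr0.
Qed.

Lemma Move_sum N (k j : 'I_d) (jk : j != k) (T : seq (R * R * R)) (P : 'I_N -> 'cV[R]_d) :
  Reach P (fun i => P i + (\sum_(q <- T) q.1.1 * sg (q.1.2 * P i j 0 + q.2)) *: ek k).
Proof.
elim: T => [|q T IH].
  by apply: (Reach_refl jk) => i; rewrite big_nil scale0r addr0.
apply: (Reach_trans IH).
apply: (@Reach_trans _ _ (fun i => Emap k j q.1.1 q.1.2 q.2
   (P i + (\sum_(q <- T) q.1.1 * sg (q.1.2 * P i j 0 + q.2)) *: ek k))).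
  exact: Reach_E.
apply: (Reach_refl jk) => i; rewrite /Emap.
have -> : (P i + (\sum_(q0 <- T) q0.1.1 * sg (q0.1.2 * P i j 0 + q0.2)) *: ek k) j 0
   = P i j 0 by rewrite !mxE (negPf jk) /= ?mulr0 ?addr0.
by rewrite big_cons scalerDl addrA addrAC.
Qed.

Context (ls : lipf sg) (naff : ~ (exists a b : R, forall u, sg u = a * u + b)).

Lemma Move N (k j : 'I_d) (jk : j != k) (P : 'I_N -> 'cV[R]_d) (C : R -> R) :
  Reach P (fun i => P i + C (P i j 0) *: ek k).
Proof.
set S := undup [seq P i j 0 | i <- enum 'I_N].
have [h [[T HT] hC]] := interp ls naff (undup_uniq [seq P i j 0 | i <- enum 'I_N]) C.
apply: (Reach_trans (Move_sum jk T P)).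
apply: (Reach_refl jk) => i; congr (_ + _ *: _).
rewrite -HT hC // mem_undup; apply: map_f; exact: mem_enum.
Qed.

End Geo.

Section Aux.
Context {R : realType}.

Lemma sum_abs_mem (bad : seq R) z : z \in bad -> `|z| <= \sum_(w <- bad) `|w|.
Proof.
elim: bad => // w bad IH; rewrite inE big_cons => /orP[/eqP->|zb].
  by rewrite lerDl sumr_ge0.
by rewrite (le_trans (IH zb)) // lerDr.
Qed.

Lemma avoid (bad : seq R) : exists K : R, 1 <= K /\ K \notin bad.
Proof.
exists (1 + \sum_(w <- bad) `|w|); split; first by rewrite lerDl sumr_ge0.
apply/negP => /sum_abs_mem; set S := \sum_(_ <- _) _ => h.
have S0 : 0 <= S by rewrite sumr_ge0.
move: h; rewrite ger0_norm; lra.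
Qed.

Lemma avoid_pos (bad : seq R) (e : R) : 0 < e ->
  exists del, 0 < del /\ del <= e /\ del \notin bad.
Proof.
move=> e0; have [K [K1 Kb]] := avoid [seq e / z | z <- bad].
have K0 : 0 < K by lra.
exists (e / K); split; first exact: divr_gt0.
split; first by rewrite ler_pdivrMr // ler_peMr // ltW.
apply/negP => db; apply: (negP Kb); apply/mapP; exists (e / K) => //.
by field; rewrite ?gt_eqF.
Qed.

Lemma fin_fun N (f v : 'I_N -> R) : injective f -> exists C : R -> R, forall i, C (f i) = v i.
Proof.
move=> finj; exists (fun t => if [pick i | f i == t] is Some i then v i else 0) => i.
case: pickP => [i' /eqP /finj -> // | H].
by move: (H i); rewrite eqxx.
Qed.
End Aux.

Section Main.
Context {R : realType} {d : nat} (sg : R -> R) (AA : set 'M[R]_d)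
  (hrow : forall l : 'I_d, [set v : 'rV[R]_d | exists A, AA A /\ row l A = v] = setT)
  (ls : lipf sg) (naff : ~ (exists a b : R, forall u, sg u = a * u + b))
  (d2 : (1 < d)%N).

Let d0 : (0 < d)%N := ltnW d2.
Let i0 : 'I_d := Ordinal d0.
Let i1 : 'I_d := Ordinal d2.
Let i10 : i1 != i0. Proof. by rewrite -val_eqE. Qed.
Let i01 : i0 != i1. Proof. by rewrite -val_eqE. Qed.

Lemma step1 N (x : 'I_N -> 'cV[R]_d) : injective x ->
  exists P, Reach sg AA x P /\ injective (fun i => P i i0 0).
Proof.
move=> injx.
have Inv : forall n, (n < d)%N -> exists P, Reach sg AA x P /\
    (forall i (l : 'I_d), l != i0 -> P i l 0 = x i l 0) /\
    (forall i i', P i i0 0 = P i' i0 0 -> forall l : 'I_d, (l <= n)%N -> x i l 0 = x i' l 0).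
  elim=> [|n IH] Hn.
    exists x; split; first exact: (Reach_refl sg hrow i10 (fun i => erefl)).
    split => // i i' E l; rewrite leqn0 => /eqP l0.
    by have -> : l = i0 by apply: val_inj.
  have [P [RP [Pl Pinj]]] := IH (ltnW Hn).
  pose l := Ordinal Hn.
  have li0 : l != i0 by rewrite -val_eqE.
  pose bad := [seq (P p.1 i0 0 - P p.2 i0 0) / (x p.2 l 0 - x p.1 l 0) | p <- enum {: 'I_N * 'I_N}].
  have [K [K1 Kbad]] := avoid bad.
  exists (fun i => P i + (K * P i l 0) *: ek i0); split.
    apply: (Reach_trans RP); exact: (Move hrow ls naff li0 P (fun t => K * t)).
  split.
    move=> i l' l'0; rewrite !mxE (negPf l'0) /= ?mulr0 ?addr0; exact: Pl.
  move=> i i' E l' hl'.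
  move: E; rewrite !mxE !eqxx /= !mulr1 (Pl i l li0) (Pl i' l li0) => E.
  have xl : x i l 0 = x i' l 0.
    apply/eqP/negPn/negP => ne; apply: (negP Kbad); apply/mapP.
    exists (i, i'); first by rewrite mem_enum.
    have dn : x i' l 0 - x i l 0 != 0 by rewrite subr_eq0 eq_sym.
    have E2 : P i i0 0 - P i' i0 0 = K * (x i' l 0 - x i l 0).
      by rewrite mulrBr; lra.
    by rewrite /= E2 mulfK.
  have P0 : P i i0 0 = P i' i0 0 by move: E; rewrite xl; lra.
  move: hl'; rewrite leq_eqVlt => /orP[/eqP hl'| hl'].
    by have -> : l' = l by apply: val_inj.
  by apply: (Pinj i i' P0 l'); rewrite -ltnS.
have hd : (d.-1 < d)%N by rewrite ltn_predL.
have [P [RP [_ Pinj]]] := Inv d.-1 hd.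
exists P; split => // i i' E; apply: injx; apply/matrixP => l z; rewrite (ord1 z).
by apply: (Pinj i i' E); rewrite -ltnS prednK.
Qed.

Lemma step2 N (P1 y' : 'I_N -> 'cV[R]_d) : injective (fun i => P1 i i0 0) ->
  exists P, Reach sg AA P1 P /\ (forall i (l : 'I_d), l != i0 -> P i l 0 = y' i l 0).
Proof.
move=> inj1.
have Inv : forall n, (n < d)%N -> exists P, Reach sg AA P1 P /\
    (forall i, P i i0 0 = P1 i i0 0) /\
    (forall i (l : 'I_d), l != i0 -> (l <= n)%N -> P i l 0 = y' i l 0).
  elim=> [|n IH] Hn.
    exists P1; split; first exact: (Reach_refl sg hrow i10 (fun i => erefl)).
    split => // i l li0; rewrite leqn0 => /eqP l0.
    have l0' : l = i0 by apply: val_inj.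
    by rewrite l0' eqxx in li0.
  have [P [RP [P0 Pl]]] := IH (ltnW Hn).
  pose l := Ordinal Hn.
  have li0 : l != i0 by rewrite -val_eqE.
  have i0l : i0 != l by rewrite eq_sym.
  have injP : injective (fun i => P i i0 0).
    by move=> i i' /=; rewrite !P0; apply: inj1.
  have [C HC] := fin_fun (fun i => y' i l 0 - P i l 0) injP.
  exists (fun i => P i + C (P i i0 0) *: ek l); split.
    apply: (Reach_trans RP); exact: (Move hrow ls naff i0l P C).
  split.
    by move=> i; rewrite !mxE (negPf i0l) /= ?mulr0 ?addr0.
  move=> i l' l'0 hl'.
  have [-> | l'l] := eqVneq l' l.
    by rewrite !mxE !eqxx /= mulr1 HC addrC subrK.
  rewrite !mxE (negPf l'l) /= ?mulr0 ?addr0; apply: Pl => //.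
  move: hl'; rewrite leq_eqVlt => /orP[/eqP hl'|]; last by rewrite ltnS.
  have l0' : l' = l by apply: val_inj.
  by rewrite l0' eqxx in l'l.
have hd : (d.-1 < d)%N by rewrite ltn_predL.
have [P [RP [_ Pl]]] := Inv d.-1 hd.
exists P; split => // i l li0; apply: Pl => //.
by rewrite -ltnS prednK.
Qed.

Lemma step3 N (P2 y' : 'I_N -> 'cV[R]_d) :
  (forall i (l : 'I_d), l != i0 -> P2 i l 0 = y' i l 0) ->
  injective (fun i => y' i i1 0) -> Reach sg AA P2 y'.
Proof.
move=> Py injy.
have injP : injective (fun i => P2 i i1 0).
  by move=> i i' /=; rewrite !Py //; apply: injy.
have [C HC] := fin_fun (fun i => y' i i0 0 - P2 i i0 0) injP.
apply: (Reach_trans (Move hrow ls naff i10 P2 C)).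
apply: (Reach_refl sg hrow i10) => i; apply/matrixP => l z; rewrite (ord1 z) !mxE.
have [-> | li0] := eqVneq l i0.
  by rewrite !eqxx /= mulr1 HC addrC subrK.
by rewrite /= ?mulr0 ?addr0 Py.
Qed.

Lemma main_interp : universal_interpolation (ctrl_family sg AA).
Proof.
move=> eps eps0 N x y injx injy.
have [P1 [R1 inj1]] := step1 injx.
pose bad2 := [seq (y p.2 i1 0 - y p.1 i1 0) / (p.1%:R - p.2%:R) | p <- enum {: 'I_N * 'I_N}].
have N1 : 0 < (N.+1)%:R :> R by rewrite ltr0n.
have [del [del0 [dele delbad]]] := avoid_pos bad2 (divr_gt0 eps0 N1).
pose y' := fun i : 'I_N => y i + (del * i%:R) *: ek i1.
have injy' : injective (fun i => y' i i1 0).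
  move=> i i' /= E; move: E; rewrite !mxE !eqxx /= !mulr1 => E.
  apply/eqP/negPn/negP => ne; apply: (negP delbad); apply/mapP.
  exists (i, i'); first by rewrite mem_enum.
  have dn : (i%:R - i'%:R : R) != 0 by rewrite subr_eq0 eqr_nat val_eqE.
  have E2 : y i' i1 0 - y i i1 0 = del * (i%:R - i'%:R) by rewrite mulrBr; lra.
  by rewrite /= E2 mulfK.
have [P2 [R2 P2y]] := step2 y' inj1.
have R3 := step3 P2y injy'.
have [phi [Hphi Ephi]] := Reach_trans R1 (Reach_trans R2 R3).
exists phi; split => // i k; rewrite Ephi /y' !mxE addrAC subrr add0r.
have hb : `|del * i%:R * ((k == i1) && true)%:R| <= del * N%:R.
  case: (k == i1) => /=; rewrite ?mulr1 ?mulr0 ?normr0; last first.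
    by rewrite mulr_ge0 // ltW.
  rewrite ger0_norm; last by rewrite mulr_ge0 ?ler0n // ltW.
  by apply: ler_wpM2l; [exact: ltW | rewrite ler_nat; exact: ltnW].
apply: (le_trans hb).
move: dele; rewrite ler_pdivlMr // -addn1 natrD mulrDr mulr1 => h.
lra.
Qed.
End Main.

Theorem corollary3p6 (R : realType) (d : nat) (sigma : R -> R)
    (AA : set 'M[R]_d) :
  (2 <= d)%N ->
  lipschitz_fun sigma ->
  ~ affine_fun sigma ->
  (forall l : 'I_d, [set v : 'rV[R]_d | exists A, AA A /\ row l A = v] = setT) ->
  universal_interpolation (ctrl_family sigma AA).
Proof.
move=> d2 lip naff hrow.
exact: (main_interp hrow lip naff d2).
Qed.
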